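(* Consider a stochastic $K$-armed bandit whose rewards lie in $[-R_{\max},R_{\max}]$, with mean reward vector $\mathbf r$, and run LB-SGB (defined in the context) with barrier parameter $\eta>0$ and learning rate $\alpha\in\Big(0,\frac{1}{6(\sqrt2R_{\max}+\frac{2}{\eta}K)}\Big)$. Then for all $t\ge1$, $$\Big|\Phi_\eta(\boldsymbol\theta_{t+1})-\Phi_\eta(\boldsymbol\theta_t)-\langle\nabla\Phi_\eta(\boldsymbol\theta_t),\boldsymbol\theta_{t+1}-\boldsymbol\theta_t\rangle\Big|\le\Big(\frac{3\|\nabla\Phi_\eta(\boldsymbol\theta_t)\|_2}{2-6\alpha(\sqrt2R_{\max}+\frac2\eta K)}+\frac{15K}{\eta}\Big)\|\boldsymbol\theta_{t+1}-\boldsymbol\theta_t\|_2^2.$$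
   Context: Softmax policy $\pi_{\boldsymbol\theta}(a)=e^{\theta(a)}/\sum_be^{\theta(b)}$; $\Phi_\eta(\boldsymbol\theta)=\pi_{\boldsymbol\theta}^\top\mathbf r+\frac1\eta\sum_a\log\pi_{\boldsymbol\theta}(a)$. LB-SGB: start from $\boldsymbol\theta=\mathbf 0$; at round $t$ sample $a_t\sim\pi_{\boldsymbol\theta_t}$, observe $R_t(a_t)$, set $\hat r_t(a)=\mathbb I\{a_t=a\}R_t(a_t)/\pi_{\boldsymbol\theta_t}(a)$ and update $\boldsymbol\theta_{t+1}=\boldsymbol\theta_t+\alpha\big[(\mathrm{diag}(\pi_{\boldsymbol\theta_t})-\pi_{\boldsymbol\theta_t}\pi_{\boldsymbol\theta_t}^\top)\hat{\mathbf r}_t+\frac1\eta(\mathbf 1-K\pi_{\boldsymbol\theta_t})\big]$. *)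

(* Defs.v *)
From HB Require Import structures.
From mathcomp Require Import all_boot all_order all_algebra.
From mathcomp Require Import all_classical all_reals all_analysis.
Set Implicit Arguments. Unset Strict Implicit. Unset Printing Implicit Defensive.
Import Order.TTheory GRing.Theory Num.Theory.
Import numFieldNormedType.Exports.
Local Open Scope ring_scope.

Section LBSGB.
Variables (R : realType) (K : nat).

Definition softmax (th : 'rV[R]_K) : 'rV[R]_K :=
  \row_i (expR (th ord0 i) / \sum_j expR (th ord0 j)).

Definition Phi (eta : R) (r : 'rV[R]_K) (th : 'rV[R]_K) : R :=
  \sum_i softmax th ord0 i * r ord0 i + eta^-1 * \sum_i ln (softmax th ord0 i).

Definition grad (f : 'rV[R]_K -> R) (th : 'rV[R]_K) : 'rV[R]_K :=
  \row_i ('D_(delta_mx ord0 i) f th).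

Definition dotv (u v : 'rV[R]_K) : R := \sum_i u ord0 i * v ord0 i.
Definition l2norm (u : 'rV[R]_K) : R := Num.sqrt (\sum_i u ord0 i ^+ 2).

Definition lbsgb_step (eta alpha : R) (th : 'rV[R]_K) (a_t : 'I_K) (Rt : R)
  : 'rV[R]_K :=
  let p := softmax th in
  let rhat := \row_a ((a == a_t)%:R * Rt / p ord0 a) in
  (* (diag(pi) - pi pi^T) rhat *)
  let g := \row_a (p ord0 a * rhat ord0 a
                   - p ord0 a * \sum_b p ord0 b * rhat ord0 b) in
  th + alpha *: (g + eta^-1 *: \row_a (1 - K%:R * p ord0 a)).

(* theta_t for t >= 1 : theta_1 = 0, theta_{t+1} = step(theta_t, a_t, R_t(a_t)).
   Index 0 is unused (also set to 0). *)
Fixpoint lbsgb_theta (eta alpha : R) (act : nat -> 'I_K) (rew : nat -> R)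
  (t : nat) : 'rV[R]_K :=
  match t with
  | 0 => 0
  | t'.+1 => if t' is 0 then 0
             else lbsgb_step eta alpha (lbsgb_theta eta alpha act rew t')
                    (act t') (rew t')
  end.

End LBSGB.

(* Main.v *)
Require Import Defs.
Set Warnings "-notation-overridden,-ambiguous-paths,-notation-incompatible-prefix".
From HB Require Import structures.
From mathcomp Require Import all_boot all_order all_algebra.
From mathcomp Require Import all_classical all_reals all_analysis.
From mathcomp Require Import ring lra.
Import Order.TTheory GRing.Theory Num.Theory.
Import numFieldNormedType.Exports.
Local Open Scope ring_scope.
Set Implicit Arguments. Unset Strict Implicit.
Section ExpBounds.
Variable R : realType.
Lemma expR_le_inv (x : R) : x < 1 -> expR x <= (1 - x)^-1.
Proof.
move=> x1.
have h := expR_ge1Dx (- x). rewrite expRN in h.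
have ex := expR_gt0 x.
have hx : 0 < 1 - x by rewrite subr_gt0.
rewrite -(@ler_pM2r _ (1 - x)) // mulVf ?gt_eqF //.
rewrite -(@ler_pM2l _ (expR x)^-1) ?invr_gt0 // mulr1 mulrA mulVf ?gt_eqF // mul1r.
exact: h.
Qed.

Lemma fder (c y : R) : is_derive y 1 (fun y : R => c * y^+2 + 1 + y - expR y) (c * (2 * y) + 1 - expR y).
Proof.
apply: is_derive_eq.
by rewrite -[y%:A]/(y * 1) mulr1 -[c *: _]/(c * _) addr0 -mulr2n mulr_natl.
Qed.

Lemma expR_quad (d x : R) : 0 <= d -> d < 1 -> `|x| <= d ->
  0 <= expR x - 1 - x <= x^+2 / (2 * (1 - d)).
Proof.
move=> d0 d1 xd.
have hd : 0 < 1 - d by rewrite subr_gt0.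
apply/andP; split; first by have := expR_ge1Dx x; lra.
set c := (2 * (1 - d))^-1.
have c0 : 0 < c by rewrite invr_gt0 mulr_gt0.
have c2 : c * 2 = (1 - d)^-1 by rewrite /c invfM mulrAC mulVf ?mul1r.
set f := fun y : R => c * y^+2 + 1 + y - expR y.
suff : 0 <= f x by rewrite /f mulrC -/c; lra.
have f0 : f 0 = 0 by rewrite /f expR0; lra.
have df y : derivable f y 1 by have [] := fder c y.
have Df y : derive1 f y = c * (2 * y) + 1 - expR y.
  by rewrite derive1E; have [_ ->] := fder c y.
have cf : continuous f.
  move=> y; exact/differentiable_continuous/derivable1_diffP.
have [x0|x0] := leP 0 x.
- rewrite -f0; apply: (@ger0_derive1_ndecr _ f 0 d) => //.
  + move=> y; rewrite in_itv /= => /andP[y0 yd].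
    rewrite Df.
    have := @expR_le_inv y (lt_trans yd d1).
    have hy : 0 < 1 - y by rewrite subr_gt0 (lt_trans yd d1).
    have vu : (1 - y)^-1 <= (1 - d)^-1 by rewrite lef_pV2 ?posrE //; lra.
    have vy : (1 - y)^-1 * (1 - y) = 1 by rewrite mulVf ?gt_eqF.
    have : (1 - y)^-1 <= 1 + y * (1 - d)^-1 by nra.
    rewrite mulrA c2; lra.
  + exact: continuous_subspaceT.
  + by rewrite -(ger0_norm x0).
- rewrite -f0; apply: (@ler0_derive1_nincr _ f (-d) 0) => //.
  + move=> y; rewrite in_itv /= => /andP[yd y0].
    rewrite Df.
    have := expR_ge1Dx y.
    have : y * (1 - d)^-1 <= y.
      have : 1 <= (1 - d)^-1 by rewrite invf_ge1 // gerBl.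
      nra.
    rewrite mulrA c2; lra.
  + exact: continuous_subspaceT.
  + by move: xd; rewrite ltr0_norm // lerNl.
  + exact: ltW.
Qed.

Lemma expR_lin (d x : R) : 0 <= d -> d < 1 -> `|x| <= d ->
  `|expR x - 1| <= `|x| / (1 - d).
Proof.
move=> d0 d1 xd.
have hd : 0 < 1 - d by rewrite subr_gt0.
have ge := expR_ge1Dx x.
have [x0|x0] := leP 0 x.
- have x1 : x < 1 by rewrite (le_lt_trans _ d1) // -(ger0_norm x0).
  have := @expR_le_inv x x1.
  have hy : 0 < 1 - x by rewrite subr_gt0.
  have vu : (1 - x)^-1 <= (1 - d)^-1.
    by rewrite lef_pV2 ?posrE //; move: xd; rewrite ger0_norm //; lra.
  have vy : (1 - x)^-1 * (1 - x) = 1 by rewrite mulVf ?gt_eqF.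
  have : (1 - x)^-1 - 1 <= x * (1 - d)^-1 by nra.
  rewrite (ger0_norm x0) ger0_norm; last by lra.
  lra.
- have e1 : expR x - 1 <= 0 by rewrite subr_le0 expR_le1 ltW.
  rewrite (ltr0_norm x0) (ler0_norm e1).
  have : 1 <= (1 - d)^-1 by rewrite invf_ge1 // gerBl.
  nra.
Qed.
End ExpBounds.
Section Deriv.
Variable R : realType.
Implicit Types (f g : R -> R) (x df dg : R).

Lemma dD f g x df dg : is_derive x 1 f df -> is_derive x 1 g dg ->
  is_derive x 1 (fun y => f y + g y) (df + dg).
Proof. move=> ? ?; exact: is_deriveD. Qed.
Lemma dB f g x df dg : is_derive x 1 f df -> is_derive x 1 g dg ->
  is_derive x 1 (fun y => f y - g y) (df - dg).
Proof. move=> ? ?; exact: is_deriveB. Qed.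
Lemma dM f g x df dg : is_derive x 1 f df -> is_derive x 1 g dg ->
  is_derive x 1 (fun y => f y * g y) (f x * dg + g x * df).
Proof. move=> ? ?; exact: is_deriveM. Qed.
Lemma dC x (c : R) : is_derive x 1 (fun _ => c) 0.
Proof. exact: is_derive_cst. Qed.
Lemma dId x : is_derive x 1 (fun y : R => y) 1.
Proof. exact: is_derive_id. Qed.
Lemma dV f x df : f x != 0 -> is_derive x 1 f df ->
  is_derive x 1 (fun y => (f y)^-1) (- (f x)^-2 * df).
Proof. move=> ? ?; exact: is_deriveV. Qed.
Lemma dE f x df : is_derive x 1 f df ->
  is_derive x 1 (fun y => expR (f y)) (expR (f x) * df).
Proof. move=> H; exact: (@is_derive1_comp R expR f x (expR (f x)) df). Qed.
Lemma dL f x df : 0 < f x -> is_derive x 1 f df ->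
  is_derive x 1 (fun y => ln (f y)) ((f x)^-1 * df).
Proof. move=> H1 H; have := @is_derive1_ln R (f x) H1 => H2; exact: (@is_derive1_comp R (@ln R) f x _ df H2 H). Qed.
Lemma dS n (f : 'I_n -> R -> R) (df : 'I_n -> R) x :
  (forall j, is_derive x 1 (f j) (df j)) ->
  is_derive x 1 (fun y => \sum_(j < n) f j y) (\sum_(j < n) df j).
Proof. move=> H; have := is_derive_sum H; by rewrite fct_sumE. Qed.
End Deriv.
Section PhiSec.
Variables (R : realType) (K : nat) (hK : (0 < K)%N).

Lemma sum_exp_gt0 (a : 'I_K -> R) : 0 < \sum_j expR (a j).
Proof.
rewrite (bigD1 (Ordinal hK)) //= ltr_wpDr ?expR_gt0 //.
by apply: sumr_ge0 => j _; exact: expR_ge0.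
Qed.

Lemma PhiE eta (r th : 'rV[R]_K) : Phi eta r th =
  (\sum_j expR (th ord0 j) * r ord0 j) / (\sum_j expR (th ord0 j))
  + eta^-1 * (\sum_j th ord0 j - K%:R * ln (\sum_j expR (th ord0 j))).
Proof.
rewrite /Phi /softmax; congr (_ + _ * _).
  by rewrite mulr_suml; apply: eq_bigr => j _; rewrite mxE mulrAC.
have S0 := sum_exp_gt0 (fun j => th ord0 j).
rewrite (eq_bigr (fun j => th ord0 j - ln (\sum_j expR (th ord0 j)))); last first.
  by move=> j _; rewrite mxE ln_div ?posrE ?expR_gt0 // expRK.
by rewrite sumrB sumr_const card_ord mulr_natl.
Qed.
End PhiSec.
Section Grad.
Variables (R : realType) (K : nat) (hK : (0 < K)%N).

Lemma dir_deriv1 (F : 'rV[R]_K -> R) (th v : 'rV[R]_K) :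
  'D_v F th = 'D_1 (fun h : R => F (h *: v + th)) 0.
Proof.
rewrite /derive /= scale0r add0r.
have -> : (fun h : R => h^-1 *: (F ((h%:A + 0) *: v + th) - F th)) =
   (fun h : R => h^-1 *: (F (h *: v + th) - F th)).
  by apply/funext => h; rewrite -[h%:A]/(h * 1) mulr1 addr0.
by [].
Qed.
End Grad.
Section Grad2.
Variables (R : realType) (K : nat) (hK : (0 < K)%N).

Lemma dlin (x c k : R) : is_derive x 1 (fun h : R => h * c + k) c.
Proof.
have H := dD (dM (dId x) (dC x c)) (dC x k).
cbv beta in H.
apply: (is_derive_eq H).
by rewrite mulr0 add0r mulr1 addr0.
Qed.

Lemma grad_entry eta (r th : 'rV[R]_K) i :
  grad (Phi eta r) th ord0 i =
  softmax th ord0 i * (r ord0 i - \sum_j softmax th ord0 j * r ord0 j)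
  + eta^-1 * (1 - K%:R * softmax th ord0 i).
Proof.
rewrite /grad mxE dir_deriv1.
set v := delta_mx ord0 i.
pose a : 'I_K -> R := fun j => th ord0 j.
pose b : 'I_K -> R := fun j => v ord0 j.
set S := fun h : R => \sum_j expR (h * b j + a j).
set N := fun h : R => \sum_j expR (h * b j + a j) * r ord0 j.
set T := fun h : R => \sum_j (h * b j + a j).
have -> : (fun h : R => Phi eta r (h *: v + th)) =
   (fun h => N h * (S h)^-1 + eta^-1 * (T h - K%:R * ln (S h))).
  apply/funext => h; rewrite (PhiE hK) /N /S /T.
  have E j : (h *: v + th) ord0 j = h * b j + a j.
    by rewrite 2!mxE.
  have E1 : \sum_j expR ((h *: v + th) ord0 j) * r ord0 j = N h.
    by apply: eq_bigr => j _; rewrite E.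
  have E2 : \sum_j expR ((h *: v + th) ord0 j) = S h.
    by apply: eq_bigr => j _; rewrite E.
  have E3 : \sum_j (h *: v + th) ord0 j = T h.
    by apply: eq_bigr => j _; rewrite E.
  by rewrite E1 E2 E3.
have S0 : 0 < S 0 by exact: (sum_exp_gt0 hK (fun j => 0 * b j + a j)).
have HE j : is_derive (0:R) 1 (fun h => expR (h * b j + a j)) (expR (a j) * b j).
  have H := dE (dlin 0 (b j) (a j)); cbv beta in H; apply: (is_derive_eq H).
  by rewrite mul0r add0r.
have HN : is_derive (0:R) 1 N (\sum_j expR (a j) * b j * r ord0 j).
  have H := dS (fun j => dM (HE j) (dC 0 (r ord0 j))); cbv beta in H; apply: (is_derive_eq H).
  by apply: eq_bigr => j _; rewrite mulr0 add0r mulrC.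
have HS : is_derive (0:R) 1 S (\sum_j expR (a j) * b j).
  have H := dS HE; cbv beta in H; exact: H.
have HT : is_derive (0:R) 1 T (\sum_j b j).
  have H := dS (fun j => dlin 0 (b j) (a j)); cbv beta in H; exact: H.
have HL := dL S0 HS.
have HV := dV (lt0r_neq0 S0) HS.
have HG := dD (dM HN HV) (dM (dC 0 eta^-1) (dB HT (dM (dC 0 K%:R) HL))).
rewrite (derive_val (is_derive := HG)).
have Sa : S 0 = \sum_j expR (a j) by apply: eq_bigr => j _; rewrite mul0r add0r.
have Na : N 0 = \sum_j expR (a j) * r ord0 j by apply: eq_bigr => j _; rewrite mul0r add0r.
have bE j : b j = (j == i)%:R by rewrite /b /v mxE eqxx.
have s1 : \sum_j expR (a j) * b j * r ord0 j = expR (a i) * r ord0 i.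
  rewrite (bigD1 i) //= big1 ?addr0; first by rewrite bE eqxx mulr1.
  by move=> j /negbTE ji; rewrite bE ji mulr0 mul0r.
have s2 : \sum_j expR (a j) * b j = expR (a i).
  rewrite (bigD1 i) //= big1 ?addr0; first by rewrite bE eqxx mulr1.
  by move=> j /negbTE ji; rewrite bE ji mulr0.
have s3 : \sum_j b j = 1.
  rewrite (bigD1 i) //= big1 ?addr0; first by rewrite bE eqxx.
  by move=> j /negbTE ji; rewrite bE ji.
rewrite s1 s2 s3 Sa Na.
have -> : \sum_j softmax th ord0 j * r ord0 j = (\sum_j expR (a j) * r ord0 j) / \sum_j expR (a j).
  by rewrite mulr_suml; apply: eq_bigr => j _; rewrite mxE mulrAC.
rewrite !mxE -/(a i) -Sa.
set Z := S 0.
have Z0 : Z != 0 by exact: lt0r_neq0.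
rewrite -Na; set n := N 0.
set e := eta^-1. by field.
Qed.
End Grad2.
Section Norms.
Variables (R : realType) (n : nat).
Implicit Types (f g h : 'I_n -> R).
Definition nrm f := Num.sqrt (\sum_j f j ^+ 2).

Lemma sumsq_ge0 f : 0 <= \sum_j f j ^+ 2.
Proof. by apply: sumr_ge0 => j _; exact: sqr_ge0. Qed.

Lemma nrm_ge0 f : 0 <= nrm f.
Proof. exact: sqrtr_ge0. Qed.

Lemma nrm_sq f : nrm f ^+ 2 = \sum_j f j ^+ 2.
Proof. by rewrite sqr_sqrtr // sumsq_ge0. Qed.

Lemma CS2 f g : (\sum_j f j * g j) ^+ 2 <= (\sum_j f j ^+ 2) * (\sum_j g j ^+ 2).
Proof.
set A := \sum_j f j ^+ 2; set B := \sum_j g j ^+ 2; set S := \sum_j f j * g j.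
have A0 : 0 <= A by exact: sumsq_ge0.
have B0 : 0 <= B by exact: sumsq_ge0.
have [Ae0|An0] := eqVneq A 0.
  have fz j : f j = 0.
    have /psumr_eq0P H : \sum_j f j ^+ 2 = 0 by exact: Ae0.
    by apply/eqP; rewrite -sqrf_eq0; apply/eqP; apply: H => // k _; exact: sqr_ge0.
  rewrite /S big1 ?expr0n ?Ae0 ?mul0r //= => j _; by rewrite fz mul0r.
set t := S / A.
have key : 0 <= \sum_j (t * f j - g j) ^+ 2 by exact: sumsq_ge0.
have E : \sum_j (t * f j - g j) ^+ 2 = t ^+ 2 * A - 2 * t * S + B.
  rewrite /A /B /S mulr_sumr mulr_sumr -sumrB -big_split /=.
  by apply: eq_bigr => j _; ring.
rewrite E in key.
have tA : t * A = S by rewrite /t divfK.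
have Ap : 0 < A by rewrite lt_def An0 A0.
nra.
Qed.

Lemma CS f g : `|\sum_j f j * g j| <= nrm f * nrm g.
Proof.
rewrite /nrm -sqrtrM ?sumsq_ge0 // -sqrtr_sqr.
by rewrite ler_wsqrtr // CS2.
Qed.

Lemma nrm_tri f g : nrm (fun j => f j - g j) <= nrm f + nrm g.
Proof.
rewrite {1}/nrm -[nrm f + nrm g]ger0_norm ?addr_ge0 ?nrm_ge0 // -sqrtr_sqr ler_wsqrtr //.
rewrite sqrrD !nrm_sq.
have E : \sum_j (f j - g j) ^+ 2 = \sum_j f j ^+ 2 + \sum_j g j ^+ 2 - 2 * \sum_j f j * g j.
  rewrite mulr_sumr -big_split -sumrB /=; apply: eq_bigr => j _; ring.
rewrite E.
have := CS f g.
have := nrm_ge0 f; have := nrm_ge0 g.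
set S := \sum_j f j * g j.
move=> *.
have : - S <= nrm f * nrm g by move: (ler_norm (- S)); rewrite normrN; lra.
nra.
Qed.

Lemma coord_le f j : `|f j| <= nrm f.
Proof.
rewrite -sqrtr_sqr /nrm ler_wsqrtr //.
rewrite (bigD1 j) //= lerDl; apply: sumr_ge0 => k _; exact: sqr_ge0.
Qed.

Lemma nrm_quad f h c : 0 <= c -> (forall j, `|f j| <= c * h j ^+ 2) ->
  nrm f <= c * nrm h ^+ 2.
Proof.
move=> c0 H.
rewrite -(ger0_norm c0) -(ger0_norm (sqr_ge0 (nrm h))) -normrM -sqrtr_sqr /nrm ler_wsqrtr //.
rewrite exprMn nrm_sq.
have : \sum_j (h j ^+ 2) ^+ 2 <= (\sum_j h j ^+ 2) ^+ 2.
  rewrite expr2 mulr_suml; apply: ler_sum => j _.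
  rewrite expr2 ler_wpM2l ?sqr_ge0 //.
  by rewrite (bigD1 j) //= lerDl; apply: sumr_ge0 => k _; exact: sqr_ge0.
move=> H2.
apply: (le_trans _ (ler_wpM2l (sqr_ge0 c) H2)).
rewrite mulr_sumr; apply: ler_sum => j _.
rewrite -(real_normK (num_real (f j))).
have := H j; have := normr_ge0 (f j); have := sqr_ge0 (h j).
move=> *; nra.
Qed.
End Norms.
Section Core.
Variables (R : realType) (K : nat) (hK : (0 < K)%N).

Definition gradv eta (r th : 'rV[R]_K) : 'I_K -> R := fun j =>
  softmax th ord0 j * (r ord0 j - \sum_k softmax th ord0 k * r ord0 k)
  + eta^-1 * (1 - K%:R * softmax th ord0 j).

Lemma core eta (r th d : 'rV[R]_K) (δ : R) :
  0 < eta -> 0 <= δ -> δ <= 6^-1 -> (forall j, `|d ord0 j| <= δ) ->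
  `|Phi eta r (th + d) - Phi eta r th - \sum_j gradv eta r th j * d ord0 j|
   <= (3 * nrm (gradv eta r th) / (2 - 6 * δ) + 15 * K%:R / eta) * nrm (fun j => d ord0 j) ^+ 2.
Proof.
move=> eta0 d0 d6 dd.
set g := gradv eta r th.
set p := fun j => softmax th ord0 j.
set rho := \sum_j p j * r ord0 j.
have d1 : δ < 1 by apply: (le_lt_trans d6); rewrite invf_lt1 // ltr1n.
set e := fun j => expR (th ord0 j).
set S := \sum_j e j.
have S0 : 0 < S by exact: (sum_exp_gt0 hK (fun j => th ord0 j)).
have pE j : p j = e j / S by rewrite /p /softmax mxE.
have p0 j : 0 < p j by rewrite pE divr_gt0 ?expR_gt0.
have sp : \sum_j p j = 1.
  by rewrite (eq_bigr _ (fun j _ => pE j)) -mulr_suml mulfV ?gt_eqF.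
have p1 j : p j <= 1.
  rewrite -sp (bigD1 j) //= lerDl; apply: sumr_ge0 => k _; exact: ltW.
set E := fun j => expR (d ord0 j).
set Z := \sum_j p j * E j.
set m := \sum_j p j * d ord0 j.
set a := fun j => p j * (r ord0 j - rho).
set y := fun j => E j - 1 - d ord0 j.
set D := nrm (fun j => d ord0 j).
have D0 : 0 <= D by exact: nrm_ge0.
have dD j : `|d ord0 j| <= D by exact: (coord_le (fun j => d ord0 j)).
have mlow : - δ <= m.
  rewrite -(mulr1 (- δ)) -sp mulr_sumr; apply: ler_sum => j _.
  have := dd j; rewrite ler_norml => /andP[h1 _]; have := p0 j; nra.
have Zlow : 1 - δ <= Z.
  have : 1 + m <= Z.
    rewrite -sp /m -big_split /=; apply: ler_sum => j _.
    have := expR_ge1Dx (d ord0 j); have := p0 j; rewrite /E; nra.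
  lra.
have Z0 : 0 < Z by apply: lt_le_trans Zlow; rewrite subr_gt0.
have Zn0 : Z != 0 by exact: lt0r_neq0.
have Sn0 : S != 0 by exact: lt0r_neq0.
set ie := eta^-1.
have PhiD : Phi eta r (th + d) = (\sum_j p j * E j * r ord0 j) / Z
    + ie * (\sum_j th ord0 j + \sum_j d ord0 j - K%:R * (ln S + ln Z)).
  rewrite (PhiE hK).
  have ent j : expR ((th + d) ord0 j) = e j * E j by rewrite mxE expRD.
  have s1 : \sum_j expR ((th + d) ord0 j) = S * Z.
    rewrite (eq_bigr _ (fun j _ => ent j)) /Z mulr_sumr; apply: eq_bigr => j _.
    by rewrite pE; field.
  have s2 : \sum_j expR ((th + d) ord0 j) * r ord0 j = S * \sum_j p j * E j * r ord0 j.
    rewrite (eq_bigr _ (fun j _ => congr1 (fun x => x * r ord0 j) (ent j))) mulr_sumr.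
    by apply: eq_bigr => j _; rewrite pE; field.
  have s3 : \sum_j (th + d) ord0 j = \sum_j th ord0 j + \sum_j d ord0 j.
    by rewrite -big_split; apply: eq_bigr => j _; rewrite mxE.
  rewrite s1 s2 s3 lnM ?posrE // -/ie.
  by field; rewrite ?Sn0 ?Zn0.
have PhiT : Phi eta r th = rho + ie * (\sum_j th ord0 j - K%:R * ln S).
  rewrite (PhiE hK) -/ie; congr (_ + _).
  have SE : \sum_j expR (th ord0 j) = S by [].
  rewrite SE /rho mulr_suml; apply: eq_bigr => j _; rewrite pE -[expR (th ord0 j)]/(e j); by field.
have gsum : \sum_j g j * d ord0 j = \sum_j a j * d ord0 j + ie * (\sum_j d ord0 j - K%:R * m).
  rewrite /m mulr_sumr -sumrB mulr_sumr -big_split /=; apply: eq_bigr => j _.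
  rewrite /g /gradv /a /rho /p -/ie; ring.
have RemE : Phi eta r (th + d) - Phi eta r th - \sum_j g j * d ord0 j =
   ((\sum_j p j * E j * r ord0 j) / Z - rho - \sum_j a j * d ord0 j)
   - K%:R / eta * (ln Z - m).
  rewrite PhiD PhiT gsum -/ie; ring.
have f1 : \sum_j a j * y j + \sum_j a j + \sum_j a j * d ord0 j = \sum_j a j * E j.
  rewrite -!big_split /=; apply: eq_bigr => j _; rewrite /y; ring.
have f2 : \sum_j a j * E j = \sum_j p j * E j * r ord0 j - rho * Z.
  rewrite /Z mulr_sumr -sumrB; apply: eq_bigr => j _; rewrite /a; ring.
have f3 : \sum_j a j = 0.
  have : \sum_j a j = rho - rho * \sum_j p j.
    rewrite mulr_sumr /rho -sumrB; apply: eq_bigr => j _; rewrite /a /rho; ring.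
  by rewrite sp mulr1 subrr.
have QE : (\sum_j p j * E j * r ord0 j) / Z - rho - \sum_j a j * d ord0 j
   = (\sum_j a j * y j + (1 - Z) * \sum_j a j * d ord0 j) / Z.
  have -> : \sum_j a j * y j = \sum_j p j * E j * r ord0 j - rho * Z - \sum_j a j * d ord0 j.
    by rewrite -f2 -f1 f3; ring.
  by field; rewrite ?Sn0 ?Zn0.
have hq : 0 < 1 - δ by rewrite subr_gt0.
set q := (1 - δ)^-1.
have q0 : 0 < q by rewrite invr_gt0.
have q1 : 1 <= q by rewrite invf_ge1 // gerBl.
have q65 : q <= 6 / 5.
  have qd : q * (1 - δ) = 1 by rewrite /q mulVf ?gt_eqF.
  nra.
set c := (2 * (1 - δ))^-1.
have cq : c = q / 2 by rewrite /c /q invfM mulrC.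
have Zinv : Z^-1 <= q by rewrite /q lef_pV2 ?posrE.
have yb j : `|y j| <= c * d ord0 j ^+ 2.
  have /andP[h1 h2] := expR_quad d0 d1 (dd j).
  rewrite ger0_norm // /c mulrC; exact: h2.
have Ny : nrm y <= c * D ^+ 2 by apply: nrm_quad => //; rewrite cq; lra.
set A := nrm a.
have A0 : 0 <= A by exact: nrm_ge0.
have Nad : `|\sum_j a j * d ord0 j| <= A * D by exact: CS.
have Nay : `|\sum_j a j * y j| <= A * nrm y by exact: CS.
have Z1 : `|1 - Z| <= q * D.
  have -> : 1 - Z = \sum_j p j * (1 - E j).
    by rewrite -{1}sp /Z -sumrB; apply: eq_bigr => j _; ring.
  apply: (le_trans (ler_norm_sum _ _ _)).
  have -> : q * D = \sum_j p j * (q * D) by rewrite -mulr_suml sp mul1r.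
  apply: ler_sum => j _; rewrite normrM (ger0_norm (ltW (p0 j))).
  apply: ler_wpM2l; first exact: ltW.
  rewrite distrC; apply: (le_trans (expR_lin d0 d1 (dd j))).
  rewrite mulrC; apply: ler_wpM2l; first exact: ltW.
  exact: dD.
set hh := fun j => ie * (1 - K%:R * p j).
have ie0 : 0 < ie by rewrite invr_gt0.
have Nh : nrm hh <= K%:R * ie.
  have K0 : 0 <= K%:R * ie :> R by rewrite mulr_ge0 ?ler0n ?ltW.
  rewrite -(ger0_norm K0) -sqrtr_sqr /nrm ler_wsqrtr //.
  have E1 : \sum_j hh j ^+ 2 = ie ^+ 2 * \sum_j (1 - K%:R * p j) ^+ 2.
    by rewrite mulr_sumr; apply: eq_bigr => j _; rewrite /hh exprMn.
  rewrite E1 exprMn mulrC ler_wpM2r ?sqr_ge0 //.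
  apply: (@le_trans _ _ (\sum_j (1 - 2 * K%:R * p j + K%:R ^+ 2 * p j))).
    apply: ler_sum => j _.
    have := p1 j; have := p0 j; have : 0 <= K%:R :> R by rewrite ler0n.
    move=> *; nra.
  rewrite big_split sumrB /= sumr_const card_ord -!mulr_sumr sp !mulr1.
  have : 1 <= K%:R :> R by rewrite ler1n.
  move=> *; nra.
have Na : A <= nrm g + K%:R * ie.
  have -> : A = nrm (fun j => g j - hh j).
    rewrite /A /nrm; congr Num.sqrt; apply: eq_bigr => j _.
    by rewrite /a /g /gradv /hh /rho /p -/ie; congr (_ ^+ 2); ring.
  apply: (le_trans (nrm_tri _ _)); rewrite lerD2l; exact: Nh.
have Lup : ln Z - m <= c * D ^+ 2.
  have h1 : ln Z <= Z - 1.
    have e1 : 1 + (Z - 1) = Z by ring.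
    have := @le_ln1Dx R (Z - 1); rewrite e1; apply; lra.
  have h2 : Z - 1 - m = \sum_j p j * y j.
    rewrite -sp /Z /m -!sumrB; apply: eq_bigr => j _; rewrite /y; ring.
  have h3 : \sum_j p j * y j <= c * D ^+ 2.
    rewrite /D nrm_sq mulr_sumr; apply: ler_sum => j _.
    apply: (le_trans (ler_wpM2l (ltW (p0 j)) (ler_norm (y j)))).
    apply: (le_trans _ (yb j)).
    have := p1 j; have := normr_ge0 (y j); move=> *; nra.
  lra.
have Llow : m <= ln Z.
  have : expR m <= Z.
    have H1 : \sum_j p j * (1 + (d ord0 j - m)) = 1.
      rewrite (eq_bigr (fun j => p j + (p j * d ord0 j - m * p j))); last first.
        by move=> j _; ring.
      by rewrite big_split sumrB /= -mulr_sumr sp -/m mulr1 subrr addr0.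
    have -> : expR m = \sum_j expR m * (p j * (1 + (d ord0 j - m))).
      by rewrite -mulr_sumr H1 mulr1.
    apply: ler_sum => j _.
    have -> : E j = expR (d ord0 j - m) * expR m by rewrite /E -expRD subrK.
    rewrite mulrCA; apply: ler_wpM2l; first exact: ltW.
    rewrite mulrC; apply: ler_wpM2r; first exact: expR_ge0.
    exact: expR_ge1Dx.
  by rewrite -ler_ln ?posrE ?expR_gt0 // expRK.
have Lb : `|ln Z - m| <= c * D ^+ 2 by rewrite ger0_norm ?subr_ge0.
rewrite RemE QE -/ie.
set u := \sum_j a j * y j.
set v := \sum_j a j * d ord0 j.
set L := ln Z - m.
set G := nrm g.
set kap := K%:R * ie.
have kap0 : 0 <= kap by rewrite mulr_ge0 ?ler0n ?ltW.
have G0 : 0 <= G by exact: nrm_ge0.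
have hQ : `|(u + (1 - Z) * v) / Z| <= (A * (c * D ^+ 2) + (q * D) * (A * D)) * q.
  rewrite normrM normfV (gtr0_norm Z0).
  apply: ler_pM; [exact: normr_ge0 | by rewrite invr_ge0 ltW | | exact: Zinv].
  apply: (le_trans (ler_normD _ _)); apply: lerD.
    apply: (le_trans Nay); apply: ler_wpM2l => //.
  rewrite normrM; apply: ler_pM => //; exact: normr_ge0.
apply: (le_trans (ler_normB _ _)).
rewrite (normrM kap) (ger0_norm kap0).
apply: (le_trans (lerD hQ (ler_wpM2l kap0 Lb))).
set w := (2 - 6 * δ)^-1.
have w2 : (1 - 3 * δ)^-1 = 2 * w.
  have e2 : 2 - 6 * δ = 2 * (1 - 3 * δ) by ring.
  have h3 : 0 < 1 - 3 * δ by lra.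
  rewrite /w e2 invfM mulrA mulfV ?mul1r //.
have qq : q ^+ 2 <= 2 * w.
  rewrite -w2 /q exprVn lef_pV2 ?posrE ?exprn_gt0 //; last by lra.
  nra.
set Q2 := q ^+ 2.
have Q20 : 0 <= Q2 by exact: sqr_ge0.
have Q2b : Q2 <= 36 / 25 by rewrite /Q2; nra.
have Coef : 3 / 2 * Q2 * A + kap * q / 2 <= 3 * G * w + 15 * kap.
  have h1 : Q2 * A <= Q2 * (G + kap) by apply: ler_wpM2l.
  have h2 : Q2 * G <= 2 * w * G by apply: ler_wpM2r.
  have h3 : Q2 * kap <= 36 / 25 * kap by apply: ler_wpM2r.
  have h4 : kap * q <= kap * (6 / 5) by apply: ler_wpM2l.
  nra.
have -> : (A * (c * D ^+ 2) + q * D * (A * D)) * q + kap * (c * D ^+ 2)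
   = (3 / 2 * Q2 * A + kap * q / 2) * D ^+ 2.
  by rewrite cq /Q2; field.
rewrite -mulrA -/w.
apply: ler_wpM2r; first exact: sqr_ge0.
rewrite -[15 * K%:R * ie]mulrA -/kap mulrA; exact: Coef.
Qed.
End Core.
Unset Implicit Arguments. Set Strict Implicit.
Theorem lemmaC2 (R : realType) (K : nat) (hK : (0 < K)%N)
  (Rmax eta alpha : R) (r : 'rV[R]_K)
  (act : nat -> 'I_K) (rew : nat -> R) :
  0 <= Rmax ->
  (forall a, `|r ord0 a| <= Rmax) ->
  (forall t, `|rew t| <= Rmax) ->
  0 < eta ->
  0 < alpha ->
  alpha < 1 / (6 * (Num.sqrt 2 * Rmax + 2 / eta * K%:R)) ->
  forall t : nat, (1 <= t)%N ->
    let th := lbsgb_theta eta alpha act rew in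
    let d := th t.+1 - th t in
    `| Phi eta r (th t.+1) - Phi eta r (th t) - dotv (grad (Phi eta r) (th t)) d |
      <= (3 * l2norm (grad (Phi eta r) (th t))
            / (2 - 6 * alpha * (Num.sqrt 2 * Rmax + 2 / eta * K%:R))
          + 15 * K%:R / eta) * l2norm d ^+ 2.
Proof.
move=> Rm0 rb rwb eta0 al0 alc [//|t'] _.
cbv zeta.
have -> : lbsgb_theta eta alpha act rew t'.+2 =
  lbsgb_step eta alpha (lbsgb_theta eta alpha act rew t'.+1) (act t'.+1) (rew t'.+1) by [].
set th := lbsgb_theta eta alpha act rew t'.+1.
set at' := act t'.+1.
set Rt := rew t'.+1.
set p := fun j => softmax th ord0 j.
set d := lbsgb_step eta alpha th at' Rt - th.
have stepE : lbsgb_step eta alpha th at' Rt = th + d by rewrite /d addrC subrK.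
have p0 j : 0 < p j.
  rewrite /p /softmax mxE divr_gt0 ?expR_gt0 //.
  exact: (sum_exp_gt0 hK (fun j => th ord0 j)).
have hsum : \sum_b p b * ((b == at')%:R * Rt / p b) = Rt.
  rewrite (bigD1 at') //= big1 ?addr0; first by rewrite eqxx mul1r mulrC divfK ?gt_eqF.
  by move=> b /negbTE ->; rewrite mul0r mul0r mulr0.
have dE j : d ord0 j = alpha * ((j == at')%:R * Rt - p j * Rt + eta^-1 * (1 - K%:R * p j)).
  rewrite /d /lbsgb_step.
  have pj : expR (th ord0 j) / (\sum_j0 expR (th ord0 j0)) = p j by rewrite /p /softmax mxE.
  rewrite !mxE pj.
  under eq_bigr do rewrite mxE.
  rewrite hsum.
  have pn : p j != 0 by exact: lt0r_neq0.
  rewrite addrC addKr; congr (_ * _).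
  rewrite mulrC divfK //.
have sp : \sum_j p j = 1.
  rewrite /p /softmax (eq_bigr (fun j => expR (th ord0 j) / \sum_k expR (th ord0 k))).
    by rewrite -mulr_suml mulfV // gt_eqF // (sum_exp_gt0 hK (fun j => th ord0 j)).
  by move=> j _; rewrite mxE.
have p1 j : p j <= 1.
  rewrite -sp (bigD1 j) //= lerDl; apply: sumr_ge0 => k _; exact: ltW.
set ie := eta^-1.
have ie0 : 0 < ie by rewrite invr_gt0.
have K1 : 1 <= K%:R :> R by rewrite ler1n.
set δ := alpha * (Rmax + K%:R * ie).
have ddb j : `|d ord0 j| <= δ.
  rewrite dE normrM (gtr0_norm al0); apply: ler_wpM2l; first exact: ltW.
  apply: (le_trans (ler_normD _ _)); apply: lerD.
    have -> : (j == at')%:R * Rt - p j * Rt = ((j == at')%:R - p j) * Rt by ring.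
    rewrite normrM -[Rmax]mul1r.
    have hx : `|(j == at')%:R - p j| <= 1.
      have := p0 j; have := p1 j.
      by case: (j == at'); rewrite /= ?mulr1n ?mulr0n ler_norml => *; apply/andP; split; lra.
    by apply: ler_pM => //; exact: rwb.
  rewrite -/ie normrM (gtr0_norm ie0) mulrC; apply: ler_wpM2r; first exact: ltW.
  have := p0 j; have := p1 j.
  by rewrite ler_norml; move=> *; apply/andP; split; nra.
set c := Num.sqrt 2 * Rmax + 2 / eta * K%:R.
have s2 : 1 <= Num.sqrt 2 :> R.
  by rewrite -{1}sqrtr1 ler_sqrt //; lra.
have c0 : 0 < c.
  rewrite /c; have : 0 < 2 / eta * K%:R by rewrite mulr_gt0 ?divr_gt0 // ltr0n.
  have : 0 <= Num.sqrt 2 * Rmax by rewrite mulr_ge0 ?sqrtr_ge0.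
  lra.
have ac6 : alpha * c * 6 < 1.
  move: alc; rewrite -/c ltr_pdivlMr ?mulr_gt0 // => h; nra.
have dc : δ <= alpha * c.
  rewrite /δ /c; apply: ler_wpM2l; first exact: ltW.
  have : Rmax <= Num.sqrt 2 * Rmax by rewrite ler_peMl.
  have : K%:R * ie <= 2 / eta * K%:R.
    rewrite mulrC; apply: ler_wpM2r; first by rewrite ler0n.
    rewrite -/ie; lra.
  lra.
have d0 : 0 <= δ.
  rewrite /δ; apply: mulr_ge0; first exact: ltW.
  apply: addr_ge0 => //; apply: mulr_ge0; [exact: ler0n | exact: ltW].
have d6 : δ <= 6^-1 by lra.
have key := core hK r th eta0 d0 d6 ddb.
rewrite stepE.
have gE : dotv (grad (Phi eta r) th) d = \sum_j gradv eta r th j * d ord0 j.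
  by rewrite /dotv; apply: eq_bigr => j _; rewrite (grad_entry hK).
have nE : l2norm (grad (Phi eta r) th) = nrm (gradv eta r th).
  rewrite /l2norm /nrm; congr Num.sqrt; apply: eq_bigr => j _.
  by rewrite (grad_entry hK).
rewrite gE nE -/c.
apply: (le_trans key).
apply: ler_wpM2r; first exact: sqr_ge0.
rewrite lerD2r -!mulrA; apply: ler_wpM2l => //.
apply: ler_wpM2l; first exact: nrm_ge0.
rewrite lef_pV2 ?posrE; try lra.
Qed.
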